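(* There is an absolute constant $c>0$ such that for every integer $n>0$ that is a power of $2$ and every integer $s$ with $0\le s<n$, if $X$ is the point set obtained from $\mathrm{BRS}(n)$ by a cyclic shift by $s$ units, then $\mathrm{WB}^{(2)}(X)\ge c\, n\log n$.
   Context: Bit reversal sequence: for an integer $i\ge0$, a set $\mathcal R$ of $2^i$ rows and a set $\mathcal C$ of $2^i$ columns, $\mathrm{BRS}(i,\mathcal R,\mathcal C)$ is defined recursively: $\mathrm{BRS}(0,\{R\},\{C\})$ is the single point $R\cap C$; and $\mathrm{BRS}(i+1,\mathcal R,\mathcal C)=\mathrm{BRS}(i,\mathcal R_{odd},\mathcal C_{left})\cup\mathrm{BRS}(i,\mathcal R_{even},\mathcal C_{right})$, where $\mathcal C_{left}$ are the leftmost $2^i$ columns of $\mathcal C$, $\mathcal C_{right}=\mathcal C\setminus\mathcal C_{left}$, and, indexing $\mathcal R=\{R_1,\dots,R_{2^{i+1}}\}$ from bottom to top, $\mathcal R_{odd}$ and $\mathcal R_{even}$ are the odd- and even-indexed rows. For $n=2^i$, $\mathrm{BRS}(n)=\mathrm{BRS}(i,\mathcal R,\mathcal C)$ with $\mathcal C$ the columns $x=1,\dots,n$ and $\mathcal R$ the rows $y=1,\dots,n$. The cyclic shift by $s$ units maps each point $(x,y)$ to $(((x-1+s)\bmod n)+1,\;y)$. Second Wilber bound: for a point set $X$ and $p\in X$, $\mathrm{funnel}(X,p)$ is the set of $q\in X$ with $q.y<p.y$ such that the smallest closed axis-parallel rectangle containing $p,q$ contains no point of $X\setminus\{p,q\}$;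 writing it as $a_1,\dots,a_r$ in increasing $y$-order, $\mathrm{alt}(X,p)$ is the number of $1\le i<r$ such that one of $a_i,a_{i+1}$ is strictly left of $p$ and the other strictly right of $p$; $\mathrm{WB}^{(2)}(X)=|X|+\sum_{p\in X}\mathrm{alt}(X,p)$. *)

(* Defs.v *)
From mathcomp Require Import all_boot.
Set Implicit Arguments. Unset Strict Implicit. Unset Printing Implicit Defensive.

(* A point is (x, y) : nat * nat; x = column, y = row. *)
Definition point := (nat * nat)%type.

(* Elements at odd (1-based) positions: R_1, R_3, ... *)
Fixpoint odd_pos (s : seq nat) : seq nat :=
  match s with
  | x :: _ :: t => x :: odd_pos t
  | [:: x] => [:: x]
  | [::] => [::]
  end.

(* Elements at even (1-based) positions: R_2, R_4, ... *)
Fixpoint even_pos (s : seq nat) : seq nat :=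
  match s with
  | _ :: y :: t => y :: even_pos t
  | _ => [::]
  end.

(* BRS i R C, with R the rows listed bottom to top and C the columns listed
   left to right, both of length 2^i. *)
Fixpoint BRS_rec (i : nat) (R C : seq nat) : seq point :=
  match i with
  | 0 => [:: (head 0 C, head 0 R)]
  | i'.+1 => BRS_rec i' (odd_pos R) (take (2 ^ i') C)
             ++ BRS_rec i' (even_pos R) (drop (2 ^ i') C)
  end.

Definition BRS (i : nat) : seq point := BRS_rec i (iota 1 (2 ^ i)) (iota 1 (2 ^ i)).

Definition cyc_shift (n s : nat) (X : seq point) : seq point :=
  [seq ((((p.1 - 1 + s) %% n) + 1), p.2) | p <- X].

Definition in_rect (p q r : point) : bool :=
  (minn p.1 q.1 <= r.1 <= maxn p.1 q.1) && (minn p.2 q.2 <= r.2 <= maxn p.2 q.2).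

Definition funnel (X : seq point) (p : point) : seq point :=
  sort (fun a b : point => a.2 <= b.2)
    [seq q <- X | (q.2 < p.2) &&
                  all (fun r => (r == p) || (r == q) || ~~ in_rect p q r) X].

Definition alt (X : seq point) (p : point) : nat :=
  let f := funnel X p in
  count (fun ab : point * point =>
           ((ab.1.1 < p.1) && (p.1 < ab.2.1)) || ((ab.2.1 < p.1) && (p.1 < ab.1.1)))
        (zip f (behead f)).

(* Second Wilber bound; X is a duplicate-free list representing the point set. *)
Definition WB2 (X : seq point) : nat := size X + \sum_(p <- X) alt X p.

(* Main.v *)
Require Import Defs.
From Stdlib Require Import Reals.
From mathcomp Require Import all_boot.
From mathcomp Require Import zify.
Set Implicit Arguments. Unset Strict Implicit. Unset Printing Implicit Defensive.

Definition swb (s : seq bool) : nat :=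
  count (fun ab : bool * bool => ab.1 != ab.2) (zip s (behead s)).

Lemma swb_cons2 x y s : swb (x :: y :: s) = (x != y) + swb (y :: s).
Proof. by []. Qed.

Lemma swb_consle x y t : swb (x :: t) <= (x != y) + swb (y :: t).
Proof.
case: t => [|h t] //; rewrite !swb_cons2 addnA leq_add2r.
by case: x; case: y; case: h.
Qed.

Lemma swb_cons_ge y t : swb t <= swb (y :: t).
Proof. by case: t => [|h t] //; rewrite swb_cons2 leq_addl. Qed.

Lemma swb_subseq_cons s2 : forall s1 x, subseq s1 s2 -> swb (x :: s1) <= swb (x :: s2).
Proof.
elim: s2 => [|y s2 IH] s1 x.
  by rewrite subseq0 => /eqP ->.
case: s1 => [|z s1] //=.
case: ifP => [/eqP -> | _] H.
  by rewrite !swb_cons2 leq_add2l IH.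
apply: leq_trans (IH _ x H) _.
by rewrite swb_cons2 swb_consle.
Qed.

Lemma swb_subseq s1 s2 : subseq s1 s2 -> swb s1 <= swb s2.
Proof.
elim: s2 s1 => [|y s2 IH] s1.
  by rewrite subseq0 => /eqP ->.
case: s1 => [|z s1] //=.
case: ifP => [/eqP -> | _] H.
  exact: swb_subseq_cons.
exact: leq_trans (IH _ H) (swb_cons_ge _ _).
Qed.

Lemma swb_rcons s : forall x y, swb (rcons (x :: s) y) = swb (x :: s) + (last x s != y).
Proof.
elim: s => [|h s IH] x y /=.
  by rewrite /swb /= addn0.
by rewrite (swb_cons2 x h) -addnA -IH.
Qed.

Definition le2 (a b : point) : bool := a.2 <= b.2.

Lemma le2_total : total le2.
Proof. by move=> a b; rewrite /le2 leq_total. Qed.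
Lemma le2_trans : transitive le2.
Proof. by move=> a b c; rewrite /le2; apply: leq_trans. Qed.

Lemma funnelE X p : funnel X p = sort le2 [seq q <- X | (q.2 < p.2) &&
                  all (fun r => (r == p) || (r == q) || ~~ in_rect p q r) X].
Proof. by []. Qed.

Lemma mem_funnel X p q : q \in funnel X p ->
  [/\ q \in X, q.2 < p.2 & all (fun r => (r == p) || (r == q) || ~~ in_rect p q r) X].
Proof. by rewrite funnelE mem_sort mem_filter => /andP [/andP [-> ->] ->]. Qed.

Lemma funnel_sorted X p : sorted le2 (funnel X p).
Proof. exact: sort_sorted le2_total _. Qed.

Definition rclosure (X : seq point) (p : point) (P : pred point) :=
  forall q r, q \in X -> r \in X -> P q -> in_rect p q r -> P r.

Lemma funnel_filter X p (P : pred point) :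
  rclosure X p P -> funnel (filter P X) p = filter P (funnel X p).
Proof.
move=> cl; rewrite !funnelE filter_sort; [|exact: le2_total|exact: le2_trans].
congr sort; rewrite -!filter_predI; apply: eq_in_filter => q qX /=.
case Pq: (P q); rewrite ?andbF ?andbT //.
congr andb; rewrite all_filter; apply: eq_in_all => r rX /=.
case Pr: (P r) => //=.
symmetry; apply/orP; right; apply/negP => H.
by move: (cl q r qX rX Pq H); rewrite Pr.
Qed.

Definition lab (p q : point) : bool := q.1 < p.1.

Lemma alt_swb X p : (forall q, q \in funnel X p -> q.1 != p.1) ->
  alt X p = swb (map (lab p) (funnel X p)).
Proof.
rewrite /alt; elim: (funnel X p) => [|x s IH] H //.
case: s IH H => [|y t] IH H //.
rewrite /= swb_cons2 -IH /=; last by move=> q qin; apply: H; rewrite inE qin orbT.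
congr addn.
have hx := H x (mem_head _ _).
have hy : y.1 != p.1 by apply: H; rewrite !inE eqxx orbT.
rewrite /lab.
move: hx hy; case: (ltngtP x.1 p.1); case: (ltngtP y.1 p.1) => //.
Qed.

Lemma path_last (s : seq point) : forall x y, path le2 x s -> y \in x :: s -> y.2 <= (last x s).2.
Proof.
elim: s => [|h s IH] x y /=.
  by rewrite inE => _ /eqP ->.
move=> /andP [hxh hp]; rewrite inE => /orP [/eqP ->|yin].
  apply: leq_trans hxh _; apply: IH => //; exact: mem_head.
exact: IH.
Qed.

Definition rowinj (X : seq point) := forall q r, q \in X -> r \in X -> q.2 = r.2 -> q = r.

Lemma top_in_funnel X p (R : pred point) q :
  rowinj X -> p \in X -> q \in X -> R q -> q.2 < p.2 ->
  (forall r, r \in X -> R r -> r.2 < p.2 -> r.2 <= q.2) ->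
  q \in funnel (filter R X) p.
Proof.
move=> ri pX qX Rq qp mx.
rewrite funnelE mem_sort mem_filter mem_filter Rq qX qp !andbT /=.
apply/allP => r; rewrite mem_filter => /andP [Rr rX].
case: (boolP (in_rect p q r)) => H; last by rewrite !orbT.
move: H; rewrite /in_rect => /andP [_ /andP [h1 h2]].
have e1 : minn p.2 q.2 = q.2 by apply/minn_idPr; exact: ltnW.
have e2 : maxn p.2 q.2 = p.2 by apply/maxn_idPl; exact: ltnW.
rewrite e1 e2 in h1 h2.
case: (ltnP r.2 p.2) => hr.
  have := mx r rX Rr hr => h3.
  have : r.2 = q.2 by apply/eqP; rewrite eqn_leq h3 h1.
  by move=> /(ri _ _ rX qX) ->; rewrite eqxx orbT.
have : r.2 = p.2 by apply/eqP; rewrite eqn_leq h2 hr.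
by move=> /(ri _ _ rX pX) ->; rewrite eqxx.
Qed.

Lemma rcons_sub (s : seq point) (Q : pred point) q1 :
  sorted le2 s -> q1 \in s -> ~~ Q q1 ->
  (forall a, a \in s -> Q a -> a.2 < q1.2) -> subseq (rcons (filter Q s) q1) s.
Proof.
move=> ss q1in nQ lt; move: ss lt; case/splitPr: q1in => s1 s2 ss lt.
have : path le2 q1 s2 by move: ss; rewrite sorted_cat_cons => /andP [].
rewrite (path_sortedE le2_trans) => /andP [al _].
have E : filter Q s2 = [::].
  rewrite (@eq_in_filter _ Q pred0) ?filter_pred0 // => a ain /=.
  apply/negbTE/negP => Qa.
  have := lt a _ Qa; rewrite mem_cat inE ain !orbT => /(_ isT).
  by have := (allP al) a ain; rewrite /le2 => h1 h2; rewrite ltnNge h1 in h2.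
rewrite filter_cat /= (negbTE nQ) E cats0 -cats1.
apply: cat_subseq; first exact: filter_subseq.
by rewrite sub1seq mem_head.
Qed.

Lemma gain X p (P Q : pred point) q1 q2 :
  rowinj X -> p \in X -> rclosure X p P -> rclosure X p Q ->
  (forall q, q \in X -> Q q -> P q) ->
  q1 \in X -> P q1 -> ~~ Q q1 -> q1.2 < p.2 ->
  (forall r, r \in X -> P r -> r.2 < p.2 -> r.2 <= q1.2) ->
  q2 \in X -> Q q2 -> q2.2 < p.2 ->
  (forall r, r \in X -> Q r -> r.2 < p.2 -> r.2 <= q2.2) ->
  swb (map (lab p) (funnel (filter Q X) p)) + (lab p q1 != lab p q2)
   <= swb (map (lab p) (funnel (filter P X) p)).
Proof.
move=> ri pX clP clQ QP q1X Pq1 nQq1 q1p mx1 q2X Qq2 q2p mx2.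
have FQ : funnel (filter Q X) p = filter Q (funnel (filter P X) p).
  rewrite !funnel_filter // -filter_predI; apply: eq_in_filter => q.
  move=> /mem_funnel [qX _ _] /=.
  by case Qq: (Q q) => //; rewrite (QP q qX Qq).
have q1in : q1 \in funnel (filter P X) p by apply: top_in_funnel.
have q2in : q2 \in funnel (filter Q X) p by apply: top_in_funnel.
set FP := funnel (filter P X) p in FQ q1in *.
have sFP : sorted le2 FP by apply: funnel_sorted.
have sub : subseq (rcons (filter Q FP) q1) FP.
  apply: rcons_sub => // a ain Qa.
  have := ain; rewrite /FP => /mem_funnel [].
  rewrite mem_filter => /andP [Pa aX] ap _.
  have := mx1 a aX Pa ap; rewrite leq_eqVlt => /orP [/eqP e|//].
  by have := ri _ _ aX q1X e => ea; rewrite -ea Qa in nQq1.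
have := swb_subseq (map_subseq (lab p) sub).
rewrite -FQ in sub *.
case E : (funnel (filter Q X) p) q2in => [|x t] // q2in.
rewrite map_rcons /= swb_rcons last_map.
have -> : last x t = q2.
  have lin : last x t \in funnel (filter Q X) p by rewrite E mem_last.
  have [] := mem_funnel lin; rewrite mem_filter => /andP [Ql lX] lp _.
  have h1 := mx2 _ lX Ql lp.
  have sQ : sorted le2 (x :: t) by rewrite -E; apply: funnel_sorted.
  have h2 := path_last sQ q2in.
  by apply: ri => //; apply/eqP; rewrite eqn_leq h1 h2.
by rewrite eq_sym.
Qed.

Lemma mono_S X p (P Q : pred point) :
  rclosure X p P -> rclosure X p Q -> (forall q, q \in X -> Q q -> P q) ->
  swb (map (lab p) (funnel (filter Q X) p)) <= swb (map (lab p) (funnel (filter P X) p)).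
Proof.
move=> clP clQ QP; apply: swb_subseq; apply: map_subseq.
have -> : funnel (filter Q X) p = filter Q (funnel (filter P X) p).
  rewrite !funnel_filter // -filter_predI; apply: eq_in_filter => q.
  move=> /mem_funnel [qX _ _] /=.
  by case Qq: (Q q) => //; rewrite (QP q qX Qq).
exact: filter_subseq.
Qed.

Lemma S_le_alt X p (P : pred point) :
  rclosure X p P -> (forall q, q \in funnel X p -> q.1 != p.1) ->
  swb (map (lab p) (funnel (filter P X) p)) <= alt X p.
Proof.
move=> clP H; rewrite alt_swb // funnel_filter //.
by apply: swb_subseq; apply: map_subseq; apply: filter_subseq.
Qed.
Set Implicit Arguments. Unset Strict Implicit. Unset Printing Implicit Defensive.

Fixpoint rev2 (i a : nat) : nat :=
  match i with
  | 0 => 0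
  | i'.+1 => if a < 2 ^ i' then (rev2 i' a).*2 else (rev2 i' (a - 2 ^ i')).*2.+1
  end.

Lemma rev2_lt i a : rev2 i a < 2 ^ i.
Proof.
elim: i a => [|i IH] a //=; rewrite expnS mul2n.
case: ifP => _; first by rewrite ltn_double.
by rewrite ltn_Sdouble.
Qed.

Lemma rev2_inj i a b : a < 2 ^ i -> b < 2 ^ i -> rev2 i a = rev2 i b -> a = b.
Proof.
elim: i a b => [|i IH] a b /=.
  by rewrite expn0 !ltnS !leqn0 => /eqP -> /eqP ->.
rewrite expnS mul2n => ha hb; rewrite -addnn in ha hb.
case: ifP => h1; case: ifP => h2.
- by move=> H; apply: IH => //; apply: double_inj.
- by move=> /(congr1 odd); rewrite /= !odd_double.
- by move=> /(congr1 odd); rewrite /= !odd_double.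
- move=> H0; have H := IH (a - 2 ^ i) (b - 2 ^ i); move: h1 h2 => /negbT h1 /negbT h2.
  rewrite -!leqNgt in h1 h2.
  have : a - 2 ^ i = b - 2 ^ i by apply: H; try lia; apply: double_inj; apply: eq_add_S.
  lia.
Qed.

Lemma rev2_surj i v : v < 2 ^ i -> exists x, x < 2 ^ i /\ rev2 i x = v.
Proof.
elim: i v => [|i IH] v /=.
  by rewrite expn0 ltnS leqn0 => /eqP ->; exists 0.
rewrite expnS => hv.
have hv2 : v./2 < 2 ^ i by rewrite ltn_half_double -mul2n.
have [y [hy ey]] := IH _ hv2.
case O: (odd v).
- exists (y + 2 ^ i); split; first lia.
  rewrite ifN; last lia.
  by rewrite addnK ey -[RHS](odd_double_half v) O add1n.
- exists y; split; first lia.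
  by rewrite ifT // ey -[RHS](odd_double_half v) O add0n.
Qed.

Lemma rev2_block m k t v : t < 2 ^ m -> v < 2 ^ k ->
  rev2 (m + k) (t * 2 ^ k + v) = rev2 m t + 2 ^ m * rev2 k v.
Proof.
elim: m t => [|m IH] t.
  by rewrite expn0 ltnS leqn0 => /eqP -> hv /=; rewrite mul0n !add0n mul1n.
rewrite addSn /= expnS => ht hv.
have P0 : 0 < 2 ^ k by rewrite expn_gt0.
rewrite expnD in IH *.
move: (rev2 m) (rev2 k) IH => rm rk IH.
case: ifP => h1.
- have htm : t < 2 ^ m.
    move: h1; set P := 2 ^ k; set M := 2 ^ m => h1; nia.
  rewrite htm IH // doubleD -!mul2n mulnA //.
- have htm : ~~ (t < 2 ^ m).
    move: h1; set P := 2 ^ k; set M := 2 ^ m => h1. apply/negP => h2.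
    have : t * P + v < M * P by nia.
    by rewrite h1.
  rewrite (negbTE htm).
  have e : t * 2 ^ k + v - 2 ^ m * 2 ^ k = (t - 2 ^ m) * 2 ^ k + v.
    rewrite -leqNgt in htm; move: htm; set P := 2 ^ k; set M := 2 ^ m => htm.
    rewrite mulnBl. nia.
  rewrite e IH //; last by rewrite -leqNgt in htm; lia.
  by rewrite doubleD -!mul2n mulnA addSn.
Qed.

Lemma oddeven_pos (t : seq nat) :
  (forall x, even_pos (x :: t) = odd_pos t) /\ (forall x, odd_pos (x :: t) = x :: even_pos t).
Proof.
elim: t => [|y t [IH1 IH2]]; split => x //.
by rewrite IH1.
Qed.

Lemma nth_oddeven (R : seq nat) : forall k,
  nth 0 (odd_pos R) k = nth 0 R k.*2 /\ nth 0 (even_pos R) k = nth 0 R k.*2.+1.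
Proof.
elim: R => [|x t IH] k; first by rewrite !nth_nil.
have [E1 E2] := oddeven_pos t.
rewrite E2 (E1 x); case: k => [|k].
  by split => //=; have [-> _] := IH 0.
split; first by rewrite /=; have [_ ->] := IH k.
by rewrite /=; have [-> _] := IH k.+1.
Qed.

Lemma size_oddeven (R : seq nat) : size (odd_pos R) = uphalf (size R) /\ size (even_pos R) = (size R)./2.
Proof.
elim: R => [|x t IH] //.
have [E1 E2] := oddeven_pos t.
rewrite E2 (E1 x) /=; case: IH => -> ->; split => //.
Qed.

Lemma BRS_rec_eq i : forall R C, size R = 2 ^ i -> size C = 2 ^ i ->
  BRS_rec i R C = [seq (nth 0 C a, nth 0 R (rev2 i a)) | a <- iota 0 (2 ^ i)].
Proof.
elim: i => [|i IH] R C hR hC.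
  by rewrite /= !nth0.
have [s1 s2] := size_oddeven R.
rewrite /= expnS mul2n -addnn iotaD add0n map_cat.
rewrite hR expnS mul2n uphalf_double in s1; rewrite hR expnS mul2n doubleK in s2.
rewrite IH // ?size_takel ?IH ?size_drop //; last by rewrite hC expnS; lia.
  2: by rewrite hC expnS; lia.
congr cat.
  apply/eq_in_map => a; rewrite mem_iota add0n => /andP [_ ha].
  by rewrite nth_take // ha (proj1 (nth_oddeven R _)).
rewrite (_ : iota (2 ^ i) (2 ^ i) = map (addn (2 ^ i)) (iota 0 (2 ^ i))); last by rewrite -iotaDl addn0.
rewrite -map_comp.
apply/eq_in_map => a; rewrite mem_iota add0n => /andP [_ ha] /=.
rewrite nth_drop ifN; last by rewrite -leqNgt leq_addr.
by rewrite addKn (proj2 (nth_oddeven R _)).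
Qed.

Definition ptf (i s a : nat) : point := (((a + s) %% 2 ^ i).+1, (rev2 i a).+1).

Lemma X_eq i s : cyc_shift (2 ^ i) s (BRS i) = map (ptf i s) (iota 0 (2 ^ i)).
Proof.
rewrite /cyc_shift /BRS BRS_rec_eq ?size_iota // -map_comp; apply/eq_in_map => a.
rewrite mem_iota add0n => /andP [_ ha] /=.
by rewrite !nth_iota ?rev2_lt // /ptf add1n subn1 /= !addn1 add1n.
Qed.

Lemma colP n s c : c < n -> s < n ->
  (c + s < n /\ (c + s) %% n = c + s) \/ (n <= c + s /\ (c + s) %% n = c + s - n).
Proof.
move=> hc hs; case: (ltnP (c + s) n) => h.
  by left; rewrite modn_small.
right; split => //.
have -> : c + s = (c + s - n) + n by rewrite subnK.
by rewrite modnDr modn_small ?addnK //; lia.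
Qed.

Definition inblk n s lo L (q : point) : bool :=
  ((lo + s) %% n).+1 <= q.1 <= ((lo + L.-1 + s) %% n).+1.

Definition nwp n s lo L : bool := (lo + L <= n - s) || (n - s <= lo).

Lemma blk_mem n s lo L c : s < n -> 0 < L -> lo + L <= n -> nwp n s lo L -> c < n ->
  (((lo + s) %% n).+1 <= ((c + s) %% n).+1 <= ((lo + L.-1 + s) %% n).+1) = (lo <= c < lo + L).
Proof.
move=> hs hL hlo hnw hc.
have h1 : lo < n by lia.
have h2 : lo + L.-1 < n by lia.
move: hnw; rewrite /nwp => hnw.
case: (colP h1 hs) => [[a1 ->]|[a1 ->]];
case: (colP h2 hs) => [[a2 ->]|[a2 ->]];
case: (colP hc hs) => [[a3 ->]|[a3 ->]];
apply/idP/idP => /andP [b1 b2]; apply/andP; split; lia.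
Qed.

Lemma blk_ord n s lo L c d : s < n -> lo + L <= n -> nwp n s lo L ->
  lo <= c < lo + L -> lo <= d < lo + L ->
  (((c + s) %% n).+1 < ((d + s) %% n).+1) = (c < d).
Proof.
move=> hs hlo hnw /andP [c1 c2] /andP [d1 d2].
have hc : c < n by lia.
have hd : d < n by lia.
move: hnw; rewrite /nwp => hnw.
case: (colP hc hs) => [[a1 ->]|[a1 ->]];
case: (colP hd hs) => [[a2 ->]|[a2 ->]];
apply/idP/idP => b; lia.
Qed.

Lemma col_inj n s c d : s < n -> c < n -> d < n -> (c + s) %% n = (d + s) %% n -> c = d.
Proof.
move=> hs hc hd.
case: (colP hc hs) => [[a1 ->]|[a1 ->]];
case: (colP hd hs) => [[a2 ->]|[a2 ->]]; lia.
Qed.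

Lemma inblk_closure n s lo L (X : seq point) p :
  inblk n s lo L p -> rclosure X p (inblk n s lo L).
Proof.
rewrite /inblk /rclosure /in_rect => /andP [p1 p2] q r _ _ /andP [q1 q2] /andP [/andP [r1 r2] _].
apply/andP; split; lia.
Qed.
From mathcomp Require Import all_boot.
From mathcomp Require Import zify.
From Stdlib Require Import Lia Lra.

Lemma sum_blocks (F : nat -> nat) m L :
  \sum_(0 <= a < m * L) F a = \sum_(0 <= t < m) \sum_(0 <= u < L) F (t * L + u).
Proof.
elim: m => [|m IH]; first by rewrite mul0n !big_geq.
rewrite big_nat_recr //= -IH mulSn addnC (@big_cat_nat _ _ _ (m * L)) ?leq_addr //=.
congr addn.
rewrite -{1}[m * L]add0n big_addn addKn.
by apply: eq_bigr => u _; rewrite addnC.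
Qed.

Lemma sum_ind lo hi L : \sum_(0 <= u < L) (lo <= u < hi) = minn L hi - minn L lo.
Proof.
elim: L => [|L IH]; first by rewrite big_geq //; lia.
rewrite big_nat_recr //= IH.
case: (ltnP L lo) => h1; case: (ltnP L hi) => h2; rewrite /=; lia.
Qed.

Lemma sum_wrap m L x : 0 < L ->
  \sum_(0 <= t < m) ~~ ((t * L + L <= x) || (x <= t * L)) <= 1.
Proof.
move=> hL; elim: m => [|m IH]; first by rewrite big_geq.
rewrite big_nat_recr //=.
case E: ((m * L + L <= x) || (x <= m * L)) => /=.
  by rewrite addn0.
rewrite big_nat_cond big1 // => t /andP [/andP [_ ht] _].
move: E => /negbT; rewrite negb_or -ltnNge -ltnNge => /andP [_ h].
suff -> : (t * L + L <= x) by [].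
apply: leq_trans (ltnW h); rewrite addnC -mulSn leq_mul2r ht orbT //.
Qed.

Lemma geom m : \sum_(0 <= k < m) 2 ^ k < 2 ^ m.
Proof.
elim: m => [|m IH]; first by rewrite big_geq.
by rewrite big_nat_recr //= expnS mul2n -addnn ltn_add2r.
Qed.

Section Levels.
Variables i s : nat.
Hypothesis hs : s < 2 ^ i.

Let n := 2 ^ i.
Let X := map (ptf i s) (iota 0 n).

Lemma n_gt0 : 0 < n. Proof. by rewrite expn_gt0. Qed.

Lemma memX q : q \in X -> exists c, c < n /\ q = ptf i s c.
Proof. by move=> /mapP [c]; rewrite mem_iota add0n => /andP [_ hc] ->; exists c. Qed.

Lemma ptfX c : c < n -> ptf i s c \in X.
Proof. by move=> hc; apply: map_f; rewrite mem_iota add0n. Qed.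

Lemma X_rowinj : rowinj X.
Proof.
move=> q r /memX [c [hc ->]] /memX [d [hd ->]] /= [e].
by rewrite (rev2_inj hc hd e).
Qed.

Lemma X_col a : a < n -> forall q, q \in funnel X (ptf i s a) -> q.1 != (ptf i s a).1.
Proof.
move=> ha q /mem_funnel [/memX [c [hc ->]] h _]; apply/negP => /eqP [e].
have ec := col_inj hs hc ha e.
by rewrite ec ltnn in h.
Qed.

Definition blk k a := a %/ 2 ^ k * 2 ^ k.
Definition Pk k a := inblk n s (blk k a) (2 ^ k).
Definition nwk k a := nwp n s (blk k a) (2 ^ k).
Definition Sk k a := swb (map (lab (ptf i s a)) (funnel (filter (Pk k a) X) (ptf i s a))).

Lemma blk_range k a : blk k a <= a < blk k a + 2 ^ k.
Proof.
rewrite /blk {2 3}(divn_eq a (2 ^ k)) leq_addr /= ltn_add2l.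
by rewrite ltn_pmod // expn_gt0.
Qed.

Lemma blk_le k a : a < n -> k <= i -> blk k a + 2 ^ k <= n.
Proof.
move=> ha hk.
have P0 : 0 < 2 ^ k by rewrite expn_gt0.
have : a %/ 2 ^ k < 2 ^ (i - k) by rewrite ltn_divLR // -expnD subnK.
move=> h.
have e : n = 2 ^ (i - k) * 2 ^ k by rewrite /n -expnD subnK.
by rewrite e /blk addnC -mulSn leq_mul2r h orbT.
Qed.

Lemma blk_nest k a : blk k.+1 a <= blk k a /\ blk k a + 2 ^ k <= blk k.+1 a + 2 ^ k.+1.
Proof.
rewrite /blk expnSr divnMA.
have := divn_eq (a %/ 2 ^ k) 2; have := ltn_pmod (a %/ 2 ^ k) (isT : 0 < 2).
move: (a %/ 2 ^ k) (2 ^ k) => q P h1 h2.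
split; nia.
Qed.

Lemma Pk_mem k a c : k <= i -> a < n -> nwk k a -> c < n ->
  Pk k a (ptf i s c) = (blk k a <= c < blk k a + 2 ^ k).
Proof.
move=> hk ha hnw hc; rewrite /Pk /inblk /=.
apply: blk_mem => //; [by rewrite expn_gt0 | exact: blk_le].
Qed.





Lemma nw_down k a : nwk k.+1 a -> nwk k a.
Proof.
rewrite /nwk /nwp; have [h1 h2] := blk_nest k a.
move=> /orP [h|h]; apply/orP; [left|right]; lia.
Qed.

Lemma step k a : k.+2 <= i -> a < n -> nwk k.+2 a ->
  Sk k.+1 a + (2 ^ k <= a %% 2 ^ k.+2 < 2 ^ k.+1) <= Sk k.+2 a.
Proof.
move=> hk ha hnw.
have hnw1 : nwk k.+1 a by apply: nw_down.
have hk1 : k.+1 <= i by lia.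
have [hb1 hb2] := blk_nest k.+1 a.
have [ra1 ra2] := andP (blk_range k.+1 a).
have [rb1 rb2] := andP (blk_range k.+2 a).
have hPa : Pk k.+2 a (ptf i s a) by rewrite Pk_mem // rb1 rb2.
have hQa : Pk k.+1 a (ptf i s a) by rewrite Pk_mem // ra1 ra2.
have clP := inblk_closure (X:=X) hPa.
have clQ := inblk_closure (X:=X) hQa.
have QP : forall q, q \in X -> Pk k.+1 a q -> Pk k.+2 a q.
  move=> q /memX [c [hc ->]]; rewrite !Pk_mem //; lia.
have pX : ptf i s a \in X by apply: ptfX.
case cond: (2 ^ k <= a %% 2 ^ k.+2 < 2 ^ k.+1); last first.
  by rewrite addn0; apply: mono_S.
set K := k.+2.
set t := a %/ 2 ^ K; set u := a %% 2 ^ K.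
have ea : a = t * 2 ^ K + u by apply: divn_eq.
have hu : 2 ^ k <= u < 2 ^ k.+1 := cond.
have P1 : 0 < 2 ^ k.+1 by rewrite expn_gt0.
have eK : 2 ^ K = 2 * 2 ^ k.+1 by rewrite /K expnS.
have hblk2 : blk K a = t * 2 ^ K by [].
have hblk1 : blk k.+1 a = t * 2 ^ K.
  have e1 : a = t * 2 * 2 ^ k.+1 + u by rewrite -mulnA -eK.
  rewrite /blk {1}e1 divnMDl // divn_small ?addn0; last by case/andP: hu.
  by rewrite -mulnA -eK.
have ht : t < 2 ^ (i - K) by rewrite ltn_divLR ?expn_gt0 // -expnD subnK.
set A := rev2 (i - K) t; set D := 2 ^ (i - K).
have D0 : 0 < D by rewrite expn_gt0.
have hrow : forall v, v < 2 ^ K -> rev2 i (t * 2 ^ K + v) = A + D * rev2 K v.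
  by move=> v hv; have := rev2_block ht hv; rewrite subnK.
have hrevK : forall v, rev2 K v = if v < 2 ^ k.+1 then (rev2 k.+1 v).*2
                                 else (rev2 k.+1 (v - 2 ^ k.+1)).*2.+1 by [].
set z := rev2 k (u - 2 ^ k).
have hu1 : rev2 k.+1 u = z.*2.+1.
  by rewrite /= ifN // -leqNgt; case/andP: hu.
have hz : z.*2 < 2 ^ k.+1 by rewrite expnS mul2n ltn_double rev2_lt.
have [x [hx ex]] := rev2_surj hz.
have hxk : x < 2 ^ k.
  move: ex; rewrite /=; case: ifP => // _ /(congr1 odd).
  by rewrite /= !odd_double.
have hx1 : rev2 K (2 ^ k.+1 + x) = (z.*2).*2.+1.
  by rewrite hrevK ifN ?addKn ?ex // -leqNgt leq_addr.
have hx2 : rev2 K x = (z.*2).*2 by rewrite hrevK hx ex.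
have hup : rev2 K u = (z.*2.+1).*2 by rewrite hrevK (proj2 (andP hu)) hu1.
set c1 := t * 2 ^ K + (2 ^ k.+1 + x).
set c2 := t * 2 ^ K + x.
have hc1n : c1 < n.
  have := blk_le (k:=K) ha hk; rewrite hblk2 /c1; lia.
have hc2n : c2 < n by rewrite /c2; lia.
have ra : a = t * 2 ^ K + u := ea.
have hvu : u < 2 ^ K by rewrite /u ltn_pmod // expn_gt0.
have rowp : rev2 i a = A + D * (z.*2.+1).*2 by rewrite {1}ra hrow // hup.
have hc1v : 2 ^ k.+1 + x < 2 ^ K by rewrite eK mul2n -addnn ltn_add2l.
have hc2v : x < 2 ^ K by rewrite eK mul2n -addnn ltn_addr.
have row1 : rev2 i c1 = A + D * (z.*2).*2.+1.
  by rewrite /c1 hrow ?hx1.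
have row2 : rev2 i c2 = A + D * (z.*2).*2.
  by rewrite /c2 hrow ?hx2.
have G := @gain X (ptf i s a) (Pk K a) (Pk k.+1 a) (ptf i s c1) (ptf i s c2)
  X_rowinj pX clP clQ QP.
have ble := blk_le (k:=K) ha hk.
have inba : blk K a <= a < blk K a + 2 ^ K by rewrite rb1 rb2.
have inb1 : blk K a <= c1 < blk K a + 2 ^ K.
  by rewrite hblk2 /c1 leq_addr ltn_add2l.
have inb2 : blk K a <= c2 < blk K a + 2 ^ K.
  by rewrite hblk2 /c2 leq_addr ltn_add2l.
have inq2 : blk k.+1 a <= c2 < blk k.+1 a + 2 ^ k.+1.
  by rewrite hblk1 /c2 leq_addr ltn_add2l.
have ninq1 : ~~ (blk k.+1 a <= c1 < blk k.+1 a + 2 ^ k.+1).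
  by rewrite hblk1 /c1; apply/negP => /andP [_]; rewrite ltn_add2l ltnNge leq_addr.
have lab1 : lab (ptf i s a) (ptf i s c1) = false.
  rewrite /lab /ptf /= (blk_ord hs ble hnw inb1 inba).
  apply/negbTE; rewrite -leqNgt /c1 {1}ra leq_add2l.
  case/andP: hu => _ h; apply: leq_trans (ltnW h) (leq_addr _ _).
have lab2 : lab (ptf i s a) (ptf i s c2) = true.
  rewrite /lab /ptf /= (blk_ord hs ble hnw inb2 inba).
  rewrite /c2 {1}ra ltn_add2l.
  case/andP: hu => h _; apply: leq_trans hxk h.
rewrite lab1 lab2 /= in G.
have hD : forall V W, (A + D * V).+1 < (A + D * W).+1 = (V < W).
  by move=> V W; rewrite ltnS ltn_add2l ltn_pmul2l.
have hD' : forall V W, (A + D * V).+1 <= (A + D * W).+1 = (V <= W).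
  by move=> V W; rewrite ltnS leq_add2l leq_pmul2l.
apply: G.
- exact: ptfX.
- by rewrite Pk_mem.
- by rewrite Pk_mem.
- by rewrite row1 rowp hD doubleS.
- move=> r /memX [c [hc ->]]; rewrite Pk_mem // hblk2 => /andP [c1' c2'].
  have ec : c = t * 2 ^ K + (c - t * 2 ^ K) by rewrite subnKC.
  have hv : c - t * 2 ^ K < 2 ^ K by rewrite ltn_subLR.
  rewrite row1 rowp /= ec hrow // hD hD'.
  by rewrite doubleS ltnS.
- exact: ptfX.
- by rewrite Pk_mem.
- by rewrite row2 rowp hD doubleS ltnS leqnSn.
- move=> r /memX [c [hc ->]]; rewrite Pk_mem // hblk1 => /andP [c1' c2'].
  have ec : c = t * 2 ^ K + (c - t * 2 ^ K) by rewrite subnKC.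
  have hv : c - t * 2 ^ K < 2 ^ k.+1 by rewrite ltn_subLR.
  have hv' : c - t * 2 ^ K < 2 ^ K by apply: leq_trans hv _; rewrite eK mul2n -addnn leq_addr.
  rewrite row2 rowp /= ec hrow // hD hD' hrevK hv.
  by rewrite ltn_double leq_double ltnS.
Qed.



Definition g a k : nat := nwk k.+1 a && (2 ^ k.-1 <= a %% 2 ^ k.+1 < 2 ^ k).

Lemma chain a m : a < n -> m <= i ->
  (\sum_(1 <= k < m) g a k <= alt X (ptf i s a)) /\
  (nwk m a -> \sum_(1 <= k < m) g a k <= Sk m a).
Proof.
move=> ha; elim: m => [|m IH] hm.
  by rewrite big_geq.
have [IH1 IH2] := IH (ltnW hm).
have SA : forall j, j <= i -> nwk j a -> Sk j a <= alt X (ptf i s a).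
  move=> j hj hnw; apply: S_le_alt; last exact: X_col.
  apply: inblk_closure; rewrite -/(Pk j a) Pk_mem //; exact: blk_range.
case: m IH IH1 IH2 hm => [|m] IH IH1 IH2 hm.
  by rewrite big_geq.
rewrite big_nat_recr //=.
case hnw: (nwk m.+2 a).
  have hnw1 : nwk m.+1 a by apply: nw_down.
  have st := step hm ha hnw.
  have H2 : \sum_(1 <= k < m.+1) g a k + g a m.+1 <= Sk m.+2 a.
    rewrite {2}/g hnw /=; apply: leq_trans st; rewrite leq_add2r; exact: IH2.
  by split => // ; apply: leq_trans H2 (SA _ hm hnw).
by rewrite {2}/g hnw /= addn0; split.
Qed.

Lemma count_level k : k.+2 <= i ->
  2 ^ k * 2 ^ (i - k.+2) <= \sum_(0 <= a < n) g a k.+1 + 2 ^ k.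
Proof.
move=> hk.
set L := 2 ^ k.+2; set m := 2 ^ (i - k.+2).
have en : n = m * L by rewrite /n /m /L -expnD subnK.
have L0 : 0 < L by rewrite expn_gt0.
rewrite en sum_blocks.
have S1 : \sum_(0 <= t < m) \sum_(0 <= u < L) g (t * L + u) k.+1 =
          \sum_(0 <= t < m) (nwp n s (t * L) L * 2 ^ k).
  apply: eq_big_nat => t /andP [_ ht].
  rewrite (@eq_big_nat _ _ _ _ _ _ (fun u => nwp n s (t * L) L * (2 ^ k <= u < 2 ^ k.+1))); last first.
    move=> u /andP [_ hu].
    have e1 : (t * L + u) %/ 2 ^ k.+2 = t by rewrite divnMDl // divn_small // addn0.
    have e2 : (t * L + u) %% 2 ^ k.+2 = u by rewrite modnMDl modn_small.
    rewrite /g /nwk /blk e1 e2 /=.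
    rewrite -/L; case: (nwp n s (t * L) L) => /=; [by rewrite mul1n | by rewrite mul0n].
  rewrite -big_distrr /= sum_ind.
  have e3 : 2 ^ k.+1 <= L by rewrite /L leq_exp2l.
  have e4 : 2 ^ k <= L by rewrite /L leq_exp2l // (leq_trans (leqnSn k)).
  have -> : minn L (2 ^ k.+1) = 2 ^ k.+1 by apply/minn_idPr.
  have -> : minn L (2 ^ k) = 2 ^ k by apply/minn_idPr.
  by rewrite expnS mul2n -addnn addnK.
rewrite S1 -big_distrl /=.
have W := sum_wrap m (n - s) L0.
have T : \sum_(0 <= t < m) nwp n s (t * L) L + \sum_(0 <= t < m) ~~ nwp n s (t * L) L = m.
  rewrite -big_split /= (eq_big_nat _ _ (F2 := fun _ => 1)); last by move=> t _; case: (nwp _ _ _ _).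
  by rewrite sum_nat_const_nat subn0 muln1.
have : m <= \sum_(0 <= t < m) nwp n s (t * L) L + 1.
  rewrite -{1}T leq_add2l; exact: W.
move: (\sum_(0 <= t < m) _) => Sm h.
rewrite mulnC -[X in _ <= _ + X]mul1n -mulnDl leq_mul2r h orbT //.
Qed.


Lemma main_nat : i * n <= 4 * WB2 X.
Proof.
rewrite /WB2 size_map size_iota big_map.
have Hs : \sum_(0 <= a < n) \sum_(1 <= k < i) g a k <= \sum_(a <- iota 0 n) alt X (ptf i s a).
  rewrite -{2}[n]subn0 -/(index_iota 0 n) big_nat_cond [Y in _ <= Y]big_nat_cond.
  apply: leq_sum => a /andP [/andP [_ ha] _]; exact: (chain ha (leqnn i)).1.
move: Hs; rewrite exchange_big_nat.
case: (ltnP i 2) => hi.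
  move=> _; apply: leq_trans (_ : 4 * n <= _); last by rewrite leq_mul2l leq_addr.
  by rewrite leq_mul2r; apply/orP; right; lia.
rewrite big_add1 /= => Hs.
set P := 2 ^ (i - 2).
have HL : \sum_(0 <= k < i.-1) P <= \sum_(0 <= k < i.-1) (\sum_(0 <= a < n) g a k.+1 + 2 ^ k).
  rewrite big_nat_cond [Y in _ <= Y]big_nat_cond.
  apply: leq_sum => k /andP [/andP [_ hk] _].
  have hk2 : k.+2 <= i by lia.
  apply: leq_trans (count_level hk2); rewrite -expnD /P; apply: eq_leq; congr expn; lia.
rewrite big_split /= sum_nat_const_nat subn0 in HL.
have G := geom i.-1.
have en : n = 4 * P by rewrite /n /P -[4]/(2 ^ 2) -expnD subnKC.
have e2 : 2 ^ i.-1 = 2 * P by rewrite /P -expnS; congr expn; lia.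
rewrite e2 in G.
move: HL G Hs; move: (\sum_(0 <= k < i.-1) _) (\sum_(0 <= k < i.-1) 2 ^ k) (\sum_(a <- iota 0 n) _) => S1 S2 S3 h1 h2 h3.
rewrite en; nia.
Qed.

End Levels.

Lemma INR2_gt0 : Rlt 0 (INR 2).
Proof. change (INR 2) with (Rplus 1 1); lra. Qed.

Lemma ln_pow2 i : ln (INR (2 ^ i)) = Rmult (INR i) (ln (INR 2)).
Proof.
elim: i => [|i IH].
  by rewrite expn0 /= ln_1 Rmult_0_l.
have h2 := INR2_gt0.
have h3 : Rlt 0 (INR (2 ^ i)) by apply: lt_0_INR; apply/ltP; rewrite expn_gt0.
rewrite expnS -multE mult_INR ln_mult // IH (S_INR i); ring.
Qed.

Lemma ln2_bounds : Rle 0 (ln (INR 2)) /\ Rle (ln (INR 2)) 1.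
Proof.
change (INR 2) with (Rplus 1 1).
split.
  rewrite -ln_1; left; apply: ln_increasing; lra.
rewrite -{3}(ln_exp 1); left; apply: ln_increasing; first lra.
have := exp_ineq1 1; lra.
Qed.

Theorem lemma4p18 :
  exists c : R, Rlt 0 c /\
    forall (i s : nat), s < 2 ^ i ->
      Rle (Rmult c (Rmult (INR (2 ^ i)) (ln (INR (2 ^ i)))))
          (INR (WB2 (cyc_shift (2 ^ i) s (BRS i)))).
Proof.
exists (Rinv 4); split; first lra.
move=> i s hs; rewrite X_eq.
have H := main_nat hs.
move: H; move: (WB2 _) => W H.
rewrite ln_pow2.
have HN : Rle 0 (INR (2 ^ i)) by apply: pos_INR.
have Hi : Rle 0 (INR i) by apply: pos_INR.
have [L0 L1] := ln2_bounds.
have HW : Rle (Rmult (INR i) (INR (2 ^ i))) (Rmult 4 (INR W)).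
  have : Rle (INR (i * 2 ^ i)) (INR (4 * W)) by apply: le_INR; apply/leP.
  rewrite -!multE !mult_INR.
  by replace (INR 4) with (IZR 4) by (simpl; lra).
have : Rle 0 (Rmult (Rmult (INR (2 ^ i)) (INR i)) (Rminus 1 (ln (INR 2)))).
  apply: Rmult_le_pos; [exact: Rmult_le_pos | lra].
nra.
Qed.
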